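(* Let $n\ge 3$ and let $\mathcal T$ be an admissible family of arcs with endpoints in $[n]$. Then the vectors $\{e_i-e_j : [i,j)\in\mathcal T\}\subset\mathbb{R}^n$ are affinely independent, and their convex hull is a non-degenerate simplex contained in the boundary of $Root_n$. Consequently, the map $\phi_n:|\mathcal K_n|\to\mathbb{R}^n$ is injective on each simplex and maps each simplex into $\partial(Root_n)$.
   Context: Identify $[n]$ with the vertices of a regular $n$-gon in $S^1$, labelled counterclockwise, with counterclockwise order $\preceq$; for $a\ne b\in[n]$, $[a,b)=\{z\in S^1:a\preceq z\prec b\}$. A finite collection of such arcs is admissible if any two distinct members $I,J$ are either intersecting and strictly nested, or disjoint with the sink of neither equal to the source of the other. $\mathcal K_n$ is the simplicial complex on the $n(n-1)$ arcs $[i,j)$, $i\neq j$, whose simplices are the nonempty admissible families. $\{e_i\}$ is the standard basis of $\mathbb{R}^n$, $Root_n=\mathrm{Conv}\{e_i-e_j:1\le i\ne j\le n\}$, a polytope of dimension $n-1$ in $H_0=\{x:\sum x_i=0\}$; its boundary is taken relative to $H_0$. $\phi_n:|\mathcal K_n|\to\mathbb{R}^n$ is the map that is affine on each simplex and sends the vertex $[i,j)$ to $e_i-e_j$. *)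

(* Defs.v *)
(* Real coefficients: an arbitrary realFieldType R
   (the statement over R = the real numbers is an instance). *)
From HB Require Import structures.
From mathcomp Require Import all_boot all_order all_algebra.
Set Implicit Arguments. Unset Strict Implicit. Unset Printing Implicit Defensive.
Import Order.TTheory GRing.Theory Num.Theory.

Local Open Scope ring_scope.

(* The vertices [n] of the regular n-gon are 'I_n, labelled counterclockwise
   (vertex k+1 of the paper is k here).  An arc [a,b) (a <> b) is encoded by
   the pair (a,b). *)

(* [a,b) as a subset of S^1 is the union of the unit half-open edges [k,k+1)
   for the vertices k with a <= k < b in counterclockwise order starting at a;
   hence set-theoretic relations between arcs are exactly those between their
   vertex sets {a, a+1, ..., b-1} (mod n). *)
Definition arc_vertices (n : nat) (a b : 'I_n) : {set 'I_n} :=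
  [set z : 'I_n | ((z + n - a) %% n < (b + n - a) %% n)%N].

Definition source (n : nat) (I : 'I_n * 'I_n) : 'I_n := I.1.
Definition sink (n : nat) (I : 'I_n * 'I_n) : 'I_n := I.2.

Definition is_arc (n : nat) (I : 'I_n * 'I_n) : Prop := I.1 <> I.2.

Definition compatible_arcs (n : nat) (I J : 'I_n * 'I_n) : Prop :=
  let SI := arc_vertices I.1 I.2 in
  let SJ := arc_vertices J.1 J.2 in
  ( SI :&: SJ != set0 /\ (SI \proper SJ \/ SJ \proper SI) )
  \/ ( SI :&: SJ = set0 /\ sink I <> source J /\ sink J <> source I ).

Definition admissible (n : nat) (T : {set 'I_n * 'I_n}) : Prop :=
  (forall I, I \in T -> is_arc I) /\
  (forall I J, I \in T -> J \in T -> I <> J -> compatible_arcs I J).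

Definition arcvec (R : realFieldType) (n : nat) (I : 'I_n * 'I_n) : 'rV[R]_n :=
  \row_k (((k == I.1)%:R : R) - (k == I.2)%:R).

Definition affinely_independent (R : realFieldType) (n : nat) (I : finType)
  (A : {set I}) (v : I -> 'rV[R]_n) : Prop :=
  forall c : I -> R,
    \sum_(i in A) c i = 0 -> \sum_(i in A) c i *: v i = 0 ->
    forall i, i \in A -> c i = 0.

Definition barycentric (R : realFieldType) (I : finType) (A : {set I}) (c : I -> R) : Prop :=
  (forall i, i \in A -> 0 <= c i) /\ \sum_(i in A) c i = 1.

Definition conv (R : realFieldType) (n : nat) (I : finType)
  (A : {set I}) (v : I -> 'rV[R]_n) (x : 'rV[R]_n) : Prop :=
  exists c : I -> R, barycentric A c /\ x = \sum_(i in A) c i *: v i.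

Definition H0 (R : realFieldType) (n : nat) (x : 'rV[R]_n) : Prop :=
  \sum_k x 0 k = 0.

Definition Root (R : realFieldType) (n : nat) (x : 'rV[R]_n) : Prop :=
  conv [set I : 'I_n * 'I_n | I.1 != I.2] (@arcvec R n) x.

(* topology of H_0 (sup-norm balls; all norms are equivalent) *)
Definition rel_interior (R : realFieldType) (n : nat) (P : 'rV[R]_n -> Prop)
  (x : 'rV[R]_n) : Prop :=
  H0 x /\ exists2 eps : R, 0 < eps &
    forall y : 'rV[R]_n, H0 y -> (forall k, `|y 0 k - x 0 k| < eps) -> P y.

Definition rel_closure (R : realFieldType) (n : nat) (P : 'rV[R]_n -> Prop)
  (x : 'rV[R]_n) : Prop :=
  H0 x /\ forall eps : R, 0 < eps ->
    exists y : 'rV[R]_n, P y /\ forall k, `|y 0 k - x 0 k| < eps.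

Definition rel_boundary (R : realFieldType) (n : nat) (P : 'rV[R]_n -> Prop)
  (x : 'rV[R]_n) : Prop :=
  rel_closure P x /\ ~ rel_interior P x.

(* Main.v *)
Require Import Defs.
From HB Require Import structures.
From mathcomp Require Import all_boot all_order all_algebra.
From mathcomp Require Import zify ring lra.
Import Order.TTheory GRing.Theory Num.Theory.
Section Comb.
Variable n : nat.
Implicit Types a b c d z : 'I_n.

Lemma modsub (x y : nat) : (x < n -> y < n -> (x + n - y) %% n = if y <= x then x - y else x + n - y)%N.
Proof.
move=> hx hy; case: leqP => h.
  have ->: (x + n - y = x - y + n)%N by lia.
  by rewrite modnDr modn_small //; lia.
by rewrite modn_small //; lia.
Qed.

Definition ina (a b z : nat) : Prop :=
  ((a <= b)%N /\ (a <= z)%N /\ (z < b)%N) \/ ((b < a)%N /\ ((a <= z)%N \/ (z < b)%N)).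

Lemma inarcP a b z : z \in arc_vertices a b <-> ina a b z.
Proof.
rewrite /ina inE !modsub //; have := ltn_ord a; have := ltn_ord b; have := ltn_ord z.
case: (leqP a z) => h1; case: (leqP a b) => h2; split; lia.
Qed.

Definition PR (z p : nat) : Prop := (z = 0%N /\ p = n.-1) \/ (0 < z /\ p = z.-1)%N.

Lemma prd_lt z : ((if (z:nat) == 0%N then n.-1 else (z:nat).-1) < n)%N.
Proof. have := ltn_ord z; case: eqP => _; lia. Qed.
Definition prd z : 'I_n := Ordinal (prd_lt z).
Lemma prdP z : PR z (prd z).
Proof. rewrite /PR /prd /=; case: eqP => h; [left|right]; lia. Qed.

Lemma ina_src (a b : nat) : (a < n -> b < n -> a <> b -> ina a b a)%N.
Proof. rewrite /ina; lia. Qed.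
Lemma ina_prd (a b p : nat) : (a < n -> b < n -> a <> b -> PR b p -> ina a b p)%N.
Proof. rewrite /ina /PR; lia. Qed.
Lemma ina_sink (a b : nat) : ~ ina a b b.
Proof. rewrite /ina; lia. Qed.
Lemma ina_step (a b c p : nat) : (a < n -> b < n -> c < n -> ina a c p -> PR b p -> c <> b -> a <> b -> ina a c b)%N.
Proof. rewrite /ina /PR; lia. Qed.
Lemma ina_back (d b a p : nat) : (d < n -> b < n -> a < n -> ina d b a -> PR a p -> d <> a -> ina d b p)%N.
Proof. rewrite /ina /PR; lia. Qed.
Lemma ina_fin (a c p : nat) : (a < n -> c < n -> ina a c p -> PR a p -> a <> c -> False)%N.
Proof. rewrite /ina /PR; lia. Qed.

Lemma ordneq a b : a <> b -> (a:nat) <> b.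
Proof. by move=> h /val_inj. Qed.

Definition arcS (I : 'I_n * 'I_n) := arc_vertices I.1 I.2.

Lemma nestP I J z : compatible_arcs I J -> z \in arcS I -> z \in arcS J ->
  arcS I \proper arcS J \/ arcS J \proper arcS I.
Proof.
rewrite /compatible_arcs /= => -[[_ h]|[h _]] zI zJ //.
have: z \in arcS I :&: arcS J by rewrite inE zI zJ.
by rewrite /arcS h inE.
Qed.

Lemma srcsink (T : {set _}) (I J : 'I_n * 'I_n) : admissible T -> I \in T -> J \in T -> I.2 <> J.1.
Proof.
case=> harc hcomp IT JT e.
case: (eqVneq I J) => [eIJ|nIJ].
  by subst J; apply: (harc I IT).
have nIJ' : I <> J by move=> h; rewrite h eqxx in nIJ.
have hc := hcomp I J IT JT nIJ'.
move: (harc I IT) (harc J JT) hc e; case: I {IT nIJ nIJ'} => a b; case: J {JT} => b' c /= hab hbc hc e.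
subst b'; rewrite /compatible_arcs /= in hc.
have nab := ordneq a b hab; have nbc := ordneq b c hbc.
have := ltn_ord a; have := ltn_ord b; have := ltn_ord c => lc lb la.
case: hc => [[_ [h|h]]|[_ [h _]]] //.
- have := subsetP (proper_sub h) (prd b).
  have HH : prd b \in arc_vertices a b by apply/inarcP; apply: ina_prd => //; exact: prdP.
  move=> /(_ HH) /inarcP H; exact: (ina_fin _ _ _ lb lc H (prdP b) nbc).
- have := subsetP (proper_sub h) b.
  have HH : b \in arc_vertices b c by apply/inarcP; apply: ina_src.
  by move=> /(_ HH) /inarcP /ina_sink.
Qed.

Lemma key (T : {set _}) (I J K : 'I_n * 'I_n) : admissible T -> I \in T -> J \in T -> K \in T -> J != I -> K != I ->
  J.1 = I.1 -> K.2 = I.2 -> (#|arcS I| <= #|arcS J|)%N -> (#|arcS I| <= #|arcS K|)%N -> False.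
Proof.
case=> harc hcomp IT JT KT nJI nKI e1 e2 sJ sK.
have cIJ : compatible_arcs I J by apply: hcomp => // h; rewrite h eqxx in nJI.
have cIK : compatible_arcs I K by apply: hcomp => // h; rewrite h eqxx in nKI.
have nJK : J <> K.
  move=> eJK; subst K; move: nJI; case: I J e1 e2 {IT JT KT cIJ cIK nKI sJ sK} => a b [a' b'] /= -> ->.
  by rewrite eqxx.
have cJK : compatible_arcs J K by apply: hcomp.
have aI := harc I IT; have aJ := harc J JT; have aK := harc K KT.
move: aI aJ aK cIJ cIK cJK nJI nKI e1 e2 sJ sK.
case: I {IT harc hcomp nJK} => a b; case: J {JT} => a' c; case: K {KT} => d b' /=.
move=> aI aJ aK cIJ cIK cJK nJI nKI e1 e2 sJ sK; subst a' b'.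
have dna : d <> a by move=> e; subst d; rewrite eqxx in nKI.
have cnb : (c:nat) <> b by move=> /val_inj e; subst c; rewrite eqxx in nJI.
have nab := ordneq a b aI; have nac := ordneq a c aJ; have ndb := ordneq d b aK.
have nda := ordneq d a dna.
have := ltn_ord a; have := ltn_ord b; have := ltn_ord c; have := ltn_ord d => ld lc lb la.
have m1 : a \in arcS (a, b) by apply/inarcP; apply: ina_src.
have m2 : a \in arcS (a, c) by apply/inarcP; apply: ina_src.
have [h|h] := nestP _ _ _ cIJ m1 m2.
  2: by have := proper_card h; rewrite /arcS /= in sJ sK *; lia.
have hIJ := subsetP (proper_sub h).
have m3 : prd b \in arcS (a, b) by apply/inarcP; apply: ina_prd => //; exact: prdP.
have m4 : prd b \in arcS (d, b) by apply/inarcP; apply: ina_prd => //; exact: prdP.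
have [h2|h2] := nestP _ _ _ cIK m3 m4.
  2: by have := proper_card h2; rewrite /arcS /= in sJ sK *; lia.
have hIK := subsetP (proper_sub h2).
have Hb : prd b \in arc_vertices a c by exact: hIJ _ m3.
have Ha : a \in arc_vertices d b by exact: hIK _ m1.
have [h3|h3] := nestP _ _ _ cJK m2 Ha.
  have := subsetP (proper_sub h3) b.
  have HH : b \in arc_vertices a c.
    apply/inarcP; apply: (ina_step _ _ _ _ la lb lc _ (prdP b)) => //; exact/inarcP.
  by move=> /(_ HH) /inarcP /ina_sink.
have := subsetP (proper_sub h3) (prd a).
have HH : prd a \in arc_vertices d b.
  apply/inarcP; apply: (ina_back _ _ _ _ ld lb la _ (prdP a)) => //; exact/inarcP.
move=> /(_ HH) /inarcP H; exact: (ina_fin _ _ _ la lc H (prdP a) nac).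
Qed.

End Comb.

Local Open Scope ring_scope.
Arguments key {n T I J K}.
Arguments srcsink {n T I J}.

Lemma coord (R : realFieldType) n (I : finType) (A : {set I}) (c : I -> R) (v : I -> 'rV[R]_n) k :
  (\sum_(i in A) c i *: v i) 0 k = \sum_(i in A) c i * v i 0 k.
Proof. rewrite summxE; apply: eq_bigr => i _; by rewrite mxE. Qed.

Lemma arcvecE (R : realFieldType) n (J : 'I_n * 'I_n) k :
  arcvec R J 0 k = (k == J.1)%:R - (k == J.2)%:R.
Proof. by rewrite mxE. Qed.

Lemma sum_delta (R : realFieldType) n (F : 'I_n -> R) a : \sum_k F k * (k == a)%:R = F a.
Proof.
rewrite (bigD1 a) //= eqxx mulr1 big1 ?addr0 // => k /negbTE ->; by rewrite mulr0.
Qed.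

Lemma H0arc (R : realFieldType) n (J : 'I_n * 'I_n) : H0 (arcvec R J).
Proof.
rewrite /H0; under eq_bigr do rewrite arcvecE.
rewrite sumrB.
have h a : \sum_(k : 'I_n) ((k == a)%:R : R) = 1.
  by rewrite (bigD1 a) //= eqxx big1 ?addr0 // => k /negbTE ->.
by rewrite !h subrr.
Qed.

Lemma ext_sum (I : finType) (V : zmodType) (A B : {set I}) (F : I -> V) :
  B \subset A -> \sum_(i in A) (if i \in B then F i else 0) = \sum_(i in B) F i.
Proof.
move=> sub; rewrite [RHS]big_mkcond [LHS]big_mkcond; apply: eq_bigr => i _.
by case hB: (i \in B); case hA: (i \in A) => //; move: (subsetP sub i); rewrite hA hB => /(_ isT).
Qed.

Theorem mainTheorem4 (R : realFieldType) (n : nat) (T : {set 'I_n * 'I_n}) :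
  (3 <= n)%N -> admissible T ->
  [/\ affinely_independent T (@arcvec R n),
      (forall x, conv T (@arcvec R n) x -> rel_boundary (@Root R n) x),
      (* phi_n injective on the simplex T (barycentric coordinates) *)
      (forall c1 c2 : 'I_n * 'I_n -> R, barycentric T c1 -> barycentric T c2 ->
         \sum_(I in T) c1 I *: arcvec R I = \sum_(I in T) c2 I *: arcvec R I ->
         forall I, I \in T -> c1 I = c2 I)
    & (* phi_n maps the simplex T into the boundary of Root_n *)
      (forall c : 'I_n * 'I_n -> R, barycentric T c ->
         rel_boundary (@Root R n) (\sum_(I in T) c I *: arcvec R I))].
Proof.
move=> n3 adm.
have harc := adm.1.
have indep : forall c : 'I_n * 'I_n -> R, \sum_(J in T) c J *: arcvec R J = 0 ->
    forall I, I \in T -> c I = 0.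
  move=> c hc I0 I0T; apply/eqP; apply/negPn/negP => cI0.
  set S0 := [set J in T | c J != 0].
  have I0S : I0 \in S0 by rewrite inE I0T.
  case: (arg_minnP (fun J => #|@arcS n J|) I0S) => I IS Imin.
  have IS2 : I \in S0 := IS; move: IS2; rewrite /S0 inE => /andP[IT cI].
  have coordk k : \sum_(J in T) c J * ((k == J.1)%:R - (k == J.2)%:R) = 0.
    have := congr1 (fun M : 'rV[R]_n => M 0 k) hc; rewrite /= coord mxE.
    by move=> h; rewrite -[RHS]h; apply: eq_bigr => J _; rewrite arcvecE.
  case: (boolP [exists J in S0, (J != I) && (J.1 == I.1)]) => [/existsP[J /andP[JS /andP[JI /eqP J1]]]|noJ].
    case: (boolP [exists K in S0, (K != I) && (K.2 == I.2)]) => [/existsP[K /andP[KS /andP[KI /eqP K2]]]|noK].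
      move: (JS) (KS); rewrite /S0 !inE => /andP[JT _] /andP[KT _].
      exact: (key adm IT JT KT JI KI J1 K2 (Imin _ JS) (Imin _ KS)).
    have := coordk I.2; rewrite (bigD1 I) //= big1.
      rewrite eqxx; have -> : (I.2 == I.1) = false by apply/negbTE/eqP; exact: (srcsink adm IT IT).
      rewrite sub0r addr0 mulrN1 => /eqP; rewrite oppr_eq0; exact/negP.
    move=> K /andP[KT KI].
    have -> : (I.2 == K.1) = false by apply/negbTE/eqP; exact: (srcsink adm IT KT).
    case: (eqVneq (c K) 0) => [->|cK]; first by rewrite mul0r.
    have -> : (I.2 == K.2) = false.
      apply/negbTE/negP => /eqP e; move/negP: noK; apply; apply/existsP; exists K.
      by rewrite /S0 inE KT cK KI e eqxx.
    by rewrite subrr mulr0.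
  have := coordk I.1; rewrite (bigD1 I) //= big1.
    rewrite eqxx; have -> : (I.1 == I.2) = false by apply/negbTE/eqP => e; exact: (srcsink adm IT IT (esym e)).
    rewrite subr0 addr0 mulr1 => /eqP; exact/negP.
  move=> K /andP[KT KI].
  have -> : (I.1 == K.2) = false by apply/negbTE/eqP => e; exact: (srcsink adm KT IT (esym e)).
  case: (eqVneq (c K) 0) => [->|cK]; first by rewrite mul0r.
  have -> : (I.1 == K.1) = false.
    apply/negbTE/negP => /eqP e; move/negP: noJ; apply; apply/existsP; exists K.
    by rewrite /S0 inE KT cK KI e eqxx.
  by rewrite subrr mulr0.

set s := fun k : 'I_n => if [exists J in T, J.1 == k] then (1:R) else -1.
set f := fun y : 'rV[R]_n => \sum_k s k * y 0 k.
have fv : forall J : 'I_n * 'I_n, f (arcvec R J) = s J.1 - s J.2.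
  move=> J; rewrite /f; under eq_bigr do rewrite arcvecE mulrBr.
  by rewrite sumrB !sum_delta.
have fsum : forall (A : {set 'I_n * 'I_n}) (c : 'I_n * 'I_n -> R),
    f (\sum_(J in A) c J *: arcvec R J) = \sum_(J in A) c J * (s J.1 - s J.2).
  move=> A c; rewrite /f; under eq_bigr do rewrite coord mulr_sumr.
  rewrite exchange_big; apply: eq_bigr => J _.
  rewrite -fv /f mulr_sumr; apply: eq_bigr => k _; by rewrite mulrCA.
have hs : forall k, s k = 1 \/ s k = -1 by move=> k; rewrite /s; case: ifP; [left|right].
have hs2 : forall J : 'I_n * 'I_n, s J.1 - s J.2 <= 2.
  by move=> J; case: (hs J.1) => ->; case: (hs J.2) => ->; lra.
have srcT : forall J, J \in T -> s J.1 = 1.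
  move=> J JT; rewrite /s; case: existsP => // H; exfalso; apply: H; exists J; by rewrite JT eqxx.
have sinkT : forall J, J \in T -> s J.2 = -1.
  move=> J JT; rewrite /s; case: existsP => // -[K /andP[KT /eqP e]]; exfalso.
  exact: (srcsink adm JT KT (esym e)).
have fR : forall y, Root y -> f y <= 2.
  move=> y [d [[d0 d1] ->]]; rewrite fsum.
  have : \sum_(J in [set I : 'I_n * 'I_n | I.1 != I.2]) d J * (s J.1 - s J.2)
      <= \sum_(J in [set I : 'I_n * 'I_n | I.1 != I.2]) d J * 2.
    by apply: ler_sum => J JA; apply: ler_wpM2l; [exact: d0 | exact: hs2].
  by rewrite -mulr_suml d1 mul1r.
have H0sum : forall (A : {set 'I_n * 'I_n}) (c : 'I_n * 'I_n -> R), H0 (\sum_(J in A) c J *: arcvec R J).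
  move=> A c; rewrite /H0; under eq_bigr do rewrite coord.
  rewrite exchange_big big1 // => J _; rewrite -mulr_sumr.
  by have := H0arc R _ J; rewrite /H0 => ->; rewrite mulr0.
have subA : T \subset [set I : 'I_n * 'I_n | I.1 != I.2].
  by apply/subsetP => J JT; rewrite inE; apply/eqP; exact: harc J JT.
have bnd : forall c : 'I_n * 'I_n -> R, barycentric T c ->
    rel_boundary (@Root R n) (\sum_(I in T) c I *: arcvec R I).
  move=> c [c0 c1]; set x := \sum_(I in T) c I *: arcvec R I.
  have fx : f x = 2.
    rewrite /x fsum; transitivity (\sum_(J in T) c J * 2).
      by apply: eq_bigr => J JT; rewrite srcT // sinkT //; congr (_ * _); lra.
    by rewrite -mulr_suml c1 mul1r.
  split.
    split; first exact: H0sum.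
    move=> eps eps0; exists x; split; last by move=> k; rewrite subrr normr0.
    exists (fun J => if J \in T then c J else 0); split; first split.
    - by move=> J _; case: ifP => // JT; exact: c0.
    - by rewrite ext_sum.
    - rewrite /x -(@ext_sum _ _ _ _ (fun J => c J *: arcvec R J) subA).
      by apply: eq_bigr => J _; case: ifP => _; rewrite ?scale0r.
  move=> [_ [eps eps0 hint]].
  case: (set_0Vmem T) => [T0|[I0 I0T]].
    by move: c1; rewrite T0 big_set0 => /eqP; rewrite eq_sym oner_eq0.
  set d := eps / 2.
  have d0 : 0 < d by rewrite /d; lra.
  set y := x + d *: arcvec R I0.
  have Hy : H0 y.
    rewrite /H0 /y; under eq_bigr do rewrite !mxE.
    rewrite big_split /= -mulr_sumr.
    have := H0sum T c; rewrite /H0 -/x => ->.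
    have h := H0arc R _ I0; rewrite /H0 in h; rewrite add0r; apply/eqP; rewrite mulf_eq0; apply/orP; right; apply/eqP; rewrite -[RHS]h; apply: eq_bigr => k _; by rewrite mxE.
  have close : forall k, `|y 0 k - x 0 k| < eps.
    move=> k; rewrite /y !mxE (addrC (x 0 k)) addrK normrM (ger0_norm (ltW d0)).
    have hv : `|((k == I0.1)%:R - (k == I0.2)%:R : R)| <= 1.
      by case: (k == I0.1); case: (k == I0.2);
        rewrite /= ?subrr ?normr0 ?subr0 ?sub0r ?normrN ?normr1.
    apply: (le_lt_trans (ler_wpM2l (ltW d0) hv)); rewrite mulr1 /d; lra.
  have := fR y (hint y Hy close).
  have -> : f y = f x + d * f (arcvec R I0).
    rewrite /f /y; under eq_bigr do rewrite !mxE mulrDr mulrCA.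
    rewrite big_split /= -mulr_sumr; congr (_ + d * _); apply: eq_bigr => k _; by rewrite mxE.
  rewrite fx fv srcT // sinkT //; lra.
split.
- by move=> c _ hc; exact: indep.
- by move=> x [c [bc ->]]; exact: bnd.
- move=> c1 c2 _ _ e I IT; apply/eqP; rewrite -subr_eq0; apply/eqP.
  apply: (indep (fun J => c1 J - c2 J)) => //.
  by under eq_bigr do rewrite scalerBl; rewrite sumrB e subrr.
- exact: bnd.
Qed.
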